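(* Consider a spherically symmetric spacetime in the setting described in the context, belonging to Case 2 (that is, $\partial_v r_->0$). Then the spacetime is either of Type 1 or of Type 2, i.e. $-1<U^{(+)}_0<U^{(+)}_\infty\le U^{(-)}_\infty<U^{(-)}_0<+1$, with $U^{(+)}_\infty=U^{(-)}_\infty$ (Type 1) or $U^{(+)}_\infty<U^{(-)}_\infty$ (Type 2).
   Context: Consider a spherically symmetric spacetime with metric $ds^2=-f(v,r)A(v,r)^2dv^2+2A(v,r)\,dr\,dv+r^2d\Omega^2$, where $d\Omega^2$ is the unit 2-sphere metric, $A>0$, $\lim_{r\to\infty}f=\lim_{r\to\infty}A=1$, and $f(v,0)=1$, $\partial_rf(v,0)=0$, $\partial_rA(v,0)=0$. It is assumed that $f(v,\cdot)=0$ has exactly two roots $r_+(v)>r_-(v)$ (the outer and inner apparent horizons, AHs), so $f(v,r)=F(v,r)(r-r_+(v))(r-r_-(v))$ with $F>0$; set $h=AF>0$. Standing assumptions: (1) $\partial_v r_+<0$; (2) $\lim_{v\to\infty}r_\pm(v)=r_c$; (3) the sign of $\partial_v r_-$ never changes; (4) the limits as $v\to\infty$ of $A,F,h$ behave as analytic functions of $r$, so all $\partial_r^n h(v,r)$ converge to finite values as $v\to\infty$; $h_c:=\lim_{v\to\infty}h(v,r_c)$. Put $x=r-r_c$, $x_\pm(v)=r_\pm(v)-r_c$ (so $x_\pm\to 0$), and regard $h$ as a function of $(v,x)$. Radially outgoing null geodesics are the solutions of $dx/dv=\tfrac12 h(v,x)(x-x_+(v))(x-x_-(v))$. Compactified outgoing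 null coordinate: fix $v_0$ and work in $v\ge v_0$; set $U=\frac{2}{\pi}\arctan((v-v_0)/r_c)$ on $\{r=0,\,v\ge v_0\}$ and $U=-\frac{2}{\pi}\arctan(r/r_c)$ on $\{v=v_0,\,r>0\}$, and extend $U$ by requiring it to be constant along each radially outgoing null geodesic; $U$ ranges over $[-1,1]$. The outer and inner AHs lie at $U=U^{(\pm)}(v)$; $U^{(\pm)}_0=U^{(\pm)}(v_0)$ and $U^{(\pm)}_\infty=\lim_{v\to\infty}U^{(\pm)}(v)$. A Case 2 spacetime is of Type 1 if $U^{(+)}_\infty=U^{(-)}_\infty$ and of Type 2 if $U^{(+)}_\infty<U^{(-)}_\infty$. *)

(* Defs.v *)
From Stdlib Require Import Reals.
From Coquelicot Require Import Coquelicot.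
Open Scope R_scope.

Definition smooth_vr (G : R -> R -> R) : Prop :=
  (forall n v r, ex_derive_n (G v) n r) /\
  (forall n v r, continuous (fun p : R * R => Derive_n (G (fst p)) n (snd p)) (v, r)).

(* Right-hand side of the radially outgoing null geodesic equation
   dr/dv = 1/2 h(v,r) (r - r_+(v)) (r - r_-(v)),  with h = A F
   (equivalently dr/dv = f A / 2, from ds^2 = 0). *)
Definition outgoing_rhs (A F : R -> R -> R) (rp rm : R -> R) (v r : R) : R :=
  / 2 * (A v r * F v r) * (r - rp v) * (r - rm v).

Definition outgoing_null_geodesic (A F : R -> R -> R) (rp rm : R -> R)
    (g : R -> R) (a b : R) : Prop :=
  forall v, a <= v <= b -> 0 <= g v /\ is_derive g v (outgoing_rhs A F rp rm v (g v)).

Definition compactified_U (A F : R -> R -> R) (rp rm : R -> R) (rc v0 : R)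
    (U : R -> R -> R) : Prop :=
  (forall v, v0 <= v -> U v 0 = 2 / PI * atan ((v - v0) / rc)) /\
  (forall r, 0 < r -> U v0 r = - (2 / PI * atan (r / rc))) /\
  (forall g a b, v0 <= a <= b -> outgoing_null_geodesic A F rp rm g a b ->
     forall v, a <= v <= b -> U v (g v) = U a (g a)).

Definition type1 (Upinf Uminf : R) : Prop := Upinf = Uminf.
Definition type2 (Upinf Uminf : R) : Prop := Upinf < Uminf.

(* Main.v *)
Require Import Defs.
From Stdlib Require Import Reals.
From Coquelicot Require Import Coquelicot.
From Stdlib Require Import Lra Psatz Classical ClassicalEpsilon.
From Stdlib Require List.
Open Scope R_scope.

Lemma der_minus f g x df dg : is_derive f x df -> is_derive g x dg ->
  is_derive (fun s => f s - g s) x (df - dg).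
Proof. intros H1 H2. exact (is_derive_minus f g x df dg H1 H2). Qed.
Lemma der_plus f g x df dg : is_derive f x df -> is_derive g x dg ->
  is_derive (fun s => f s + g s) x (df + dg).
Proof. intros H1 H2. exact (is_derive_plus f g x df dg H1 H2). Qed.
Lemma der_mult f g x df dg : is_derive f x df -> is_derive g x dg ->
  is_derive (fun s => f s * g s) x (df * g x + f x * dg).
Proof. intros H1 H2. exact (is_derive_mult f g x df dg H1 H2 Rmult_comm). Qed.

Lemma cont_eps (f : R -> R) t :
  (forall eps, 0 < eps -> exists d, 0 < d /\ forall y, Rabs (y - t) < d -> Rabs (f y - f t) < eps) ->
  continuous f t.
Proof.
  intros H. apply filterlim_locally. intros eps.
  destruct (H eps (cond_pos eps)) as [d [Hd Hy]].
  exists (mkposreal d Hd). intros y Hb. apply Hy. exact Hb.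
Qed.

Lemma cont_lip (f : R -> R) t K :
  (forall y, Rabs (f y - f t) <= K * Rabs (y - t)) -> continuous f t.
Proof.
  intros H. apply cont_eps. intros eps He.
  exists (eps / (Rabs K + 1)). split.
  { apply Rdiv_lt_0_compat; [lra| pose proof (Rabs_pos K); lra]. }
  intros y Hy. eapply Rle_lt_trans; [apply H|].
  pose proof (Rabs_pos K). pose proof (Rabs_pos (y - t)).
  assert (K * Rabs (y - t) <= Rabs K * Rabs (y - t)).
  { apply Rmult_le_compat_r; [lra| apply Rle_abs]. }
  assert (Rabs K * Rabs (y-t) <= Rabs K * (eps / (Rabs K + 1))).
  { apply Rmult_le_compat_l; lra. }
  assert (Rabs K * (eps / (Rabs K + 1)) < eps).
  { apply Rmult_lt_reg_r with (Rabs K + 1). lra.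
    field_simplify; lra. }
  lra.
Qed.

Lemma der_cont_pt f x d : is_derive f x d -> continuity_pt f x.
Proof.
  intros H. apply continuity_pt_filterlim. apply (ex_derive_continuous f x).
  exists d; exact H.
Qed.

Lemma cmp (u du w dw : R -> R) a b : a <= b ->
  (forall s, is_derive u s (du s)) -> (forall s, is_derive w s (dw s)) ->
  (forall s, a <= s <= b -> Rabs (du s) <= dw s) ->
  Rabs (u b - u a) <= w b - w a.
Proof.
  intros Hab Hu Hw Hb.
  destruct (MVT_gen (fun s => u s - w s) a b (fun s => du s - dw s)) as [c [Hc Hm]].
  { intros x _. apply der_minus; auto. }
  { intros x _. apply der_cont_pt with (du x - dw x). apply der_minus; auto. }
  destruct (MVT_gen (fun s => u s + w s) a b (fun s => du s + dw s)) as [c' [Hc' Hm']].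
  { intros x _. apply der_plus; auto. }
  { intros x _. apply der_cont_pt with (du x + dw x). apply der_plus; auto. }
  rewrite Rmin_left in Hc, Hc' by lra. rewrite Rmax_right in Hc, Hc' by lra.
  specialize (Hb c Hc) as B1. specialize (Hb c' Hc') as B2.
  apply Rabs_le.
  pose proof (Rabs_le_between (du c) (dw c)) as [X1 _]. specialize (X1 B1).
  pose proof (Rabs_le_between (du c') (dw c')) as [X2 _]. specialize (X2 B2).
  split; nra.
Qed.

Definition W (L t0 s : R) := exp (2 * L * Rabs (s - t0)).

Lemma W_ge1 L t0 s : 0 <= L -> 1 <= W L t0 s.
Proof.
  intros HL. unfold W. pose proof (Rabs_pos (s - t0)).
  pose proof (exp_ineq1_le (2 * L * Rabs (s - t0))).
  assert (0 <= 2 * L * Rabs (s - t0)) by (apply Rmult_le_pos; lra). lra.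
Qed.

Lemma Wlemma (u du : R -> R) (L D t0 : R) : 0 < L -> 0 <= D ->
  (forall s, is_derive u s (du s)) -> u t0 = 0 ->
  (forall s, Rabs (du s) <= L * D * W L t0 s) ->
  forall t, Rabs (u t) <= D / 2 * W L t0 t.
Proof.
  intros HL HD Hu H0 Hb t.
  destruct (Rle_or_lt t0 t) as [Ht|Ht].
  - pose proof (cmp u du (fun s => D / 2 * exp (2 * L * (s - t0)))
                 (fun s => D * L * exp (2 * L * (s - t0))) t0 t Ht Hu) as C.
    rewrite H0, Rminus_0_r in C.
    assert (E: W L t0 t = exp (2 * L * (t - t0))).
    { unfold W. rewrite Rabs_right by lra. reflexivity. }
    rewrite E. eapply Rle_trans; [apply C|].
    + intros s. auto_derive; [exact I| unfold Rminus; field].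
    + intros s Hs. eapply Rle_trans; [apply Hb|].
      unfold W. rewrite Rabs_right by lra. right; ring.
    + rewrite Rminus_eq_0, Rmult_0_r, exp_0.
      pose proof (exp_pos (2 * L * (t - t0))). nra.
  - pose proof (cmp u du (fun s => - (D / 2) * exp (2 * L * (t0 - s)))
                 (fun s => D * L * exp (2 * L * (t0 - s))) t t0 ltac:(lra) Hu) as C.
    rewrite H0 in C.
    assert (E: W L t0 t = exp (2 * L * (t0 - t))).
    { unfold W. rewrite Rabs_left by lra. f_equal. ring. }
    rewrite E. rewrite Rabs_minus_sym, Rminus_0_r in C.
    eapply Rle_trans; [apply C|].
    + intros s. auto_derive; [exact I| unfold Rminus; field].
    + intros s Hs. eapply Rle_trans; [apply Hb|].
      unfold W. rewrite Rabs_left1 by lra. replace (- (s - t0)) with (t0 - s) by ring. right; ring.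
    + rewrite Rminus_eq_0, Rmult_0_r, exp_0.
      pose proof (exp_pos (2 * L * (t0 - t))). nra.
Qed.

Lemma pow2_ge n : INR n <= 2 ^ n.
Proof.
  induction n. simpl; lra. rewrite S_INR. simpl.
  pose proof (pow_le 2 n ltac:(lra)). 
  assert (1 <= 2 ^ n) by (apply pow_R1_Rle; lra). lra.
Qed.

Lemma halving_zero a c : 0 <= c -> (forall n, a <= c / 2 ^ n) -> a <= 0.
Proof.
  intros Hc H. destruct (Rle_or_lt a 0) as [|Ha]; [auto|exfalso].
  destruct (archimed (c / a)) as [H1 _].
  destruct (Rle_or_lt (IZR (up (c / a))) 0) as [Hn|Hp].
  - assert (0 <= c / a) by (apply Rdiv_le_0_compat; lra). lra.
  - destruct (IZN (up (c / a))) as [m Hm]. { apply le_IZR. lra. }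
    rewrite Hm, <- INR_IZR_INZ in H1.
    specialize (H m). pose proof (pow2_ge m).
    assert (P: 0 < 2 ^ m) by (apply pow_lt; lra).
    assert (a * 2 ^ m <= c).
    { apply Rmult_le_reg_r with (/ 2 ^ m). apply Rinv_0_lt_compat; auto.
      field_simplify; try lra. }
    assert (c / a * a = c) by (field; lra).
    nra.
Qed.

Lemma Witer (u du : R -> R) (L D t0 : R) : 0 < L -> 0 <= D ->
  (forall s, is_derive u s (du s)) -> u t0 = 0 ->
  (forall s, Rabs (du s) <= L * Rabs (u s)) ->
  (forall s, Rabs (u s) <= D * W L t0 s) ->
  forall t, u t = 0.
Proof.
  intros HL HD Hu H0 Hlip Hb t.
  assert (forall n s, Rabs (u s) <= D / 2 ^ n * W L t0 s).
  { induction n; intros s. simpl. rewrite Rdiv_1_r. auto.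
    replace (D / 2 ^ S n) with ((D / 2 ^ n) / 2) by (simpl; field; apply pow_nonzero; lra).
    apply Wlemma with du; auto.
    - apply Rdiv_le_0_compat; auto. apply pow_lt; lra.
    - intros s'. eapply Rle_trans; [apply Hlip|].
      rewrite Rmult_assoc. apply Rmult_le_compat_l; [lra| apply IHn]. }
  assert (Rabs (u t) <= 0).
  { apply halving_zero with (D * W L t0 t).
    - apply Rmult_le_pos; auto. pose proof (W_ge1 L t0 t); lra.
    - intros n. specialize (H n t). unfold Rdiv in *. lra. }
  pose proof (Rabs_pos (u t)). apply Rabs_eq_0. lra.
Qed.

Lemma der_const (c x : R) : is_derive (fun _ => c) x 0.
Proof. auto_derive; auto. Qed.

Lemma ftc (f : R -> R) a c : (forall t, continuous f t) ->
  forall t, is_derive (fun t => c + RInt f a t) t (f t).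
Proof.
  intros Hf t.
  assert (is_derive (fun t => RInt f a t) t (f t)).
  { apply is_derive_RInt with (a := a); [|apply Hf].
    exists (mkposreal 1 Rlt_0_1). intros y _. apply RInt_correct.
    apply ex_RInt_continuous. intros z _; apply Hf. }
  pose proof (der_plus (fun _ => c) _ t 0 (f t) (is_derive_const c t) H) as H'.
  rewrite Rplus_0_l in H'. exact H'.
Qed.

Lemma seq_lim (a : nat -> R) c : 0 <= c ->
  (forall n, Rabs (a (S n) - a n) <= c / 2 ^ (S n)) ->
  {l | forall n, Rabs (l - a n) <= c / 2 ^ n}.
Proof.
  intros Hc Ha.
  set (d := fun n => a n - c / 2 ^ n). set (b := fun n => a n + c / 2 ^ n).
  assert (Hd : forall n, d n <= d (S n)).
  { intros n. unfold d. specialize (Ha n). apply Rabs_le_between in Ha.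
    simpl in *. assert (0 < 2 ^ n) by (apply pow_lt; lra).
    assert (c / (2 * 2 ^ n) = c / 2 ^ n / 2) by (field; lra). lra. }
  assert (Hb : forall n, b (S n) <= b n).
  { intros n. unfold b. specialize (Ha n). apply Rabs_le_between in Ha.
    simpl in *. assert (0 < 2 ^ n) by (apply pow_lt; lra).
    assert (c / (2 * 2 ^ n) = c / 2 ^ n / 2) by (field; lra). lra. }
  assert (Hdm : forall n k, d n <= d (n + k)%nat).
  { intros n k; induction k. rewrite Nat.add_0_r; lra.
    rewrite Nat.add_succ_r. specialize (Hd (n + k)%nat). lra. }
  assert (Hbm : forall n k, b (n + k)%nat <= b n).
  { intros n k; induction k. rewrite Nat.add_0_r; lra.
    rewrite Nat.add_succ_r. specialize (Hb (n + k)%nat). lra. }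
  assert (Hdb : forall n, d n <= b n).
  { intros n. unfold d, b. assert (0 < 2 ^ n) by (apply pow_lt; lra).
    assert (0 <= c / 2 ^ n) by (apply Rdiv_le_0_compat; lra). lra. }
  assert (Hall : forall n m, d n <= b m).
  { intros n m. destruct (Nat.le_ge_cases n m) as [H|H].
    - destruct (Nat.le_exists_sub n m H) as [k [-> _]].
      specialize (Hdm n k). rewrite Nat.add_comm in Hdm. specialize (Hdb (k + n)%nat). lra.
    - destruct (Nat.le_exists_sub m n H) as [k [-> _]].
      specialize (Hbm m k). rewrite Nat.add_comm in Hbm. specialize (Hdb (k + m)%nat). lra. }
  set (E := fun y => exists n, y = d n).
  assert (Eb : bound E). { exists (b 0%nat). intros y [n ->]. apply Hall. }
  assert (Ene : exists y, E y). { exists (d 0%nat). exists 0%nat; auto. }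
  destruct (completeness E Eb Ene) as [l [Hub Hlub]].
  exists l. intros n.
  assert (d n <= l) by (apply Hub; exists n; auto).
  assert (l <= b n) by (apply Hlub; intros y [m ->]; apply Hall).
  unfold d, b in *. apply Rabs_le_between. lra.
Qed.

Section ODE.
Variable Phi : R -> R -> R.
Variables K L : R.
Hypothesis HK : forall s x, Rabs (Phi s x) <= K.
Hypothesis HL0 : 0 < L.
Hypothesis HL : forall s x y, Rabs (Phi s x - Phi s y) <= L * Rabs (x - y).
Hypothesis HC : forall g, (forall t, continuous g t) -> forall t, continuous (fun s => Phi s (g s)) t.

Lemma K_nonneg : 0 <= K.
Proof. pose proof (HK 0 0). pose proof (Rabs_pos (Phi 0 0)). lra. Qed.

Lemma ode_unique (g1 g2 : R -> R) t1 :
  (forall t, is_derive g1 t (Phi t (g1 t))) ->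
  (forall t, is_derive g2 t (Phi t (g2 t))) ->
  g1 t1 = g2 t1 -> forall t, g1 t = g2 t.
Proof.
  intros H1 H2 E t.
  pose proof K_nonneg.
  assert (Hd : forall s, is_derive (fun s => g1 s - g2 s) s (Phi s (g1 s) - Phi s (g2 s))).
  { intros s; apply der_minus; auto. }
  assert (B : forall s, Rabs (g1 s - g2 s) <= (2 * K / L) / 2 * W L t1 s).
  { apply Wlemma with (fun s => Phi s (g1 s) - Phi s (g2 s)); auto.
    - apply Rdiv_le_0_compat; lra.
    - rewrite E; ring.
    - intros s. pose proof (W_ge1 L t1 s ltac:(lra)).
      replace (L * (2 * K / L) * W L t1 s) with (2 * K * W L t1 s) by (field; lra).
      eapply Rle_trans; [apply Rabs_triang|]. rewrite Rabs_Ropp.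
      pose proof (HK s (g1 s)); pose proof (HK s (g2 s)). nra. }
  pose proof (Witer (fun s => g1 s - g2 s) _ L (2 * K / L / 2) t1 HL0 ltac:(apply Rdiv_le_0_compat; [apply Rdiv_le_0_compat|]; lra) Hd ltac:(cbv beta; rewrite E; ring)
     ltac:(intros s; apply HL) B t). simpl in H0. lra.
Qed.

Variables t0 x0 : R.

Fixpoint iter (n : nat) : R -> R :=
  match n with
  | O => fun _ => x0
  | S m => fun t => x0 + RInt (fun s => Phi s (iter m s)) t0 t
  end.

Lemma iter_props : forall n, (forall t, continuous (iter n) t) /\
   (forall t, is_derive (iter (S n)) t (Phi t (iter n t))).
Proof.
  induction n.
  - assert (C0 : forall t, continuous (iter 0) t) by (intros; apply continuous_const).
    split; auto. intros t. apply (ftc (fun s => Phi s (iter 0 s))). apply HC. exact C0.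
  - destruct IHn as [C D]. 
    assert (C1 : forall t, continuous (iter (S n)) t).
    { intros t. apply (ex_derive_continuous (iter (S n))). eexists; apply D. }
    split; auto. intros t. apply (ftc (fun s => Phi s (iter (S n) s))). apply HC. exact C1.
Qed.

Lemma iter_t0 n : iter n t0 = x0.
Proof. destruct n; simpl; auto. rewrite RInt_point. unfold zero; simpl; ring. Qed.

Lemma iter_diff : forall n t, Rabs (iter (S n) t - iter n t) <= K / L / 2 ^ (S n) * W L t0 t.
Proof.
  pose proof K_nonneg.
  induction n; intros t.
  - replace (K / L / 2 ^ 1) with (K / L / 2) by (simpl; field; lra).
    apply (Wlemma (fun s => iter 1 s - iter 0 s) (fun s => Phi s (iter 0 s) - 0) L (K / L) t0); auto.
    + apply Rdiv_le_0_compat; lra.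
    + intros s. apply der_minus. apply iter_props. apply der_const.
    + rewrite !iter_t0; ring.
    + intros s. rewrite Rminus_0_r. pose proof (W_ge1 L t0 s ltac:(lra)).
      replace (L * (K / L) * W L t0 s) with (K * W L t0 s) by (field; lra).
      pose proof (HK s (iter 0 s)). nra.
  - replace (K / L / 2 ^ S (S n)) with (K / L / 2 ^ (S n) / 2) by (assert (0 < 2 ^ n) by (apply pow_lt; lra); simpl; field; lra).
    apply (Wlemma (fun s => iter (S (S n)) s - iter (S n) s) (fun s => Phi s (iter (S n) s) - Phi s (iter n s)) L (K / L / 2 ^ S n) t0); auto.
    + apply Rdiv_le_0_compat. apply Rdiv_le_0_compat; lra. apply pow_lt; lra.
    + intros s. apply der_minus; apply iter_props.
    + rewrite !iter_t0; ring.
    + intros s. eapply Rle_trans; [apply HL|]. rewrite Rmult_assoc.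
      apply Rmult_le_compat_l; [lra| apply IHn].
Qed.

Lemma iter_lip : forall n t t', Rabs (iter n t - iter n t') <= K * Rabs (t - t').
Proof.
  pose proof K_nonneg.
  intros [|n] t t'.
  - simpl. rewrite Rminus_eq_0, Rabs_R0. apply Rmult_le_pos; auto; apply Rabs_pos.
  - assert (G : forall a b, a <= b -> Rabs (iter (S n) b - iter (S n) a) <= K * (b - a)).
    { intros a b Hab. pose proof (cmp (iter (S n)) (fun s => Phi s (iter n s)) (fun s => K * s) (fun _ => K) a b Hab) as C.
      replace (K * (b - a)) with (K * b - K * a) by ring. apply C.
      - apply iter_props.
      - intros s. pose proof (is_derive_scal (fun s => s) s K 1 (is_derive_id s)). rewrite Rmult_1_r in H0. exact H0.
      - intros; apply HK. }
    destruct (Rle_or_lt t' t).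
    + rewrite (Rabs_right (t - t')) by lra. apply G; lra.
    + rewrite Rabs_minus_sym, (Rabs_left (t - t')) by lra.
      replace (- (t - t')) with (t' - t) by ring. apply G; lra.
Qed.

Lemma ode_exists : exists g, g t0 = x0 /\ forall t, is_derive g t (Phi t (g t)).
Proof.
  pose proof K_nonneg as HK0.
  assert (HX : forall t, {l | forall n, Rabs (l - iter n t) <= K / L * W L t0 t / 2 ^ n}).
  { intros t. apply seq_lim.
    - apply Rmult_le_pos. apply Rdiv_le_0_compat; lra. pose proof (W_ge1 L t0 t); lra.
    - intros n. eapply Rle_trans; [apply iter_diff|]. right. unfold Rdiv. ring. }
  set (x := fun t => proj1_sig (HX t)).
  assert (Hx : forall n t, Rabs (x t - iter n t) <= K / L * W L t0 t / 2 ^ n).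
  { intros n t. unfold x. destruct (HX t) as [l Hl]. simpl. apply Hl. }
  assert (Hx0 : x t0 = x0).
  { assert (Rabs (x t0 - x0) <= 0).
    { apply halving_zero with (K / L * W L t0 t0).
      - apply Rmult_le_pos. apply Rdiv_le_0_compat; lra. pose proof (W_ge1 L t0 t0); lra.
      - intros n. rewrite <- (iter_t0 n) at 1. apply Hx. }
    pose proof (Rabs_pos (x t0 - x0)). assert (Rabs (x t0 - x0) = 0) by lra.
    apply Rabs_eq_0 in H1. lra. }
  assert (Hxl : forall t t', Rabs (x t - x t') <= K * Rabs (t - t')).
  { intros t t'.
    assert (Rabs (x t - x t') - K * Rabs (t - t') <= 0).
    { apply halving_zero with (K / L * W L t0 t + K / L * W L t0 t').
      - pose proof (W_ge1 L t0 t ltac:(lra)); pose proof (W_ge1 L t0 t' ltac:(lra)).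
        assert (0 <= K / L) by (apply Rdiv_le_0_compat; lra). nra.
      - intros n. pose proof (Hx n t). pose proof (Hx n t'). pose proof (iter_lip n t t').
        pose proof (Rabs_triang (x t - iter n t) (iter n t - x t')).
        pose proof (Rabs_triang (iter n t - iter n t') (iter n t' - x t')).
        rewrite Rabs_minus_sym in H0.
        replace (x t - iter n t + (iter n t - x t')) with (x t - x t') in H2 by ring.
        replace (iter n t - iter n t' + (iter n t' - x t')) with (iter n t - x t') in H3 by ring.
        unfold Rdiv in *. rewrite Rmult_plus_distr_r. lra. }
    lra. }
  assert (Hxc : forall t, continuous x t).
  { intros t. apply cont_lip with K. intros y. apply Hxl. }
  set (y := fun t => x0 + RInt (fun s => Phi s (x s)) t0 t).
  assert (Hy : forall t, is_derive y t (Phi t (x t))).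
  { intros t. apply (ftc (fun s => Phi s (x s))). apply HC. exact Hxc. }
  assert (Hy0 : y t0 = x0). { unfold y. rewrite RInt_point. unfold zero; simpl; ring. }
  assert (Hyn : forall n t, Rabs (y t - iter (S n) t) <= K / L / 2 ^ n / 2 * W L t0 t).
  { intros n. apply (Wlemma (fun s => y s - iter (S n) s) (fun s => Phi s (x s) - Phi s (iter n s)) L (K / L / 2 ^ n) t0); auto.
    - apply Rdiv_le_0_compat. apply Rdiv_le_0_compat; lra. apply pow_lt; lra.
    - intros s. apply der_minus; [apply Hy| apply iter_props].
    - rewrite Hy0, iter_t0; ring.
    - intros s. eapply Rle_trans; [apply HL|]. rewrite Rmult_assoc.
      apply Rmult_le_compat_l; [lra|]. eapply Rle_trans; [apply Hx|]. right. unfold Rdiv; ring. }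
  assert (Hxy : forall t, x t = y t).
  { intros t. assert (Rabs (x t - y t) <= 0).
    { apply halving_zero with (K / L * W L t0 t).
      - apply Rmult_le_pos. apply Rdiv_le_0_compat; lra. pose proof (W_ge1 L t0 t); lra.
      - intros n. pose proof (Hx (S n) t). pose proof (Hyn n t).
        pose proof (Rabs_triang (x t - iter (S n) t) (iter (S n) t - y t)).
        replace (x t - iter (S n) t + (iter (S n) t - y t)) with (x t - y t) in H1 by ring.
        rewrite Rabs_minus_sym in H0. simpl pow in H.
        assert (0 < 2 ^ n) by (apply pow_lt; lra).
        replace (K / L * W L t0 t / (2 * 2 ^ n)) with (K / L / 2 ^ n / 2 * W L t0 t) in H by (field; lra).
        replace (K / L * W L t0 t / 2 ^ n) with (K / L / 2 ^ n / 2 * W L t0 t + K / L / 2 ^ n / 2 * W L t0 t) by (field; lra).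
        lra. }
    pose proof (Rabs_pos (x t - y t)). assert (Rabs (x t - y t) = 0) by lra.
    apply Rabs_eq_0 in H1. lra. }
  exists x. split; auto. intros t.
  apply is_derive_ext with y. intros t2; symmetry; apply Hxy. apply Hy.
Qed.
End ODE.

Lemma cont_to_eps (f : R -> R) t : continuous f t ->
  forall eps, 0 < eps -> exists d, 0 < d /\ forall y, Rabs (y - t) < d -> Rabs (f y - f t) < eps.
Proof.
  intros H eps He. apply filterlim_locally with (eps := mkposreal eps He) in H.
  destruct H as [d Hd]. exists d. split; [apply cond_pos|]. intros y Hy. apply (Hd y). exact Hy.
Qed.

Lemma der_local (f : R -> R) c d : is_derive f c d -> d < 0 ->
  exists del, 0 < del /\ forall h, 0 < h < del -> f (c + h) < f c.
Proof.
  intros H Hd. apply is_derive_Reals in H.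
  destruct (H (- d / 2) ltac:(lra)) as [del Hdel].
  exists del. split; [apply cond_pos|]. intros h Hh.
  assert (h <> 0) by lra. assert (Rabs h < del) by (rewrite Rabs_right; lra).
  specialize (Hdel h H0 H1). apply Rabs_lt_between in Hdel.
  destruct Hdel as [_ Hu].
  assert ((f (c + h) - f c) / h < d / 2) by lra.
  apply Rmult_lt_compat_r with (r := h) in H2; [|lra].
  field_simplify in H2; [|lra]. nra.
Qed.

Lemma barrier (D : R -> R) a b : a < b -> (forall x, ex_derive D x) ->
  D a <= 0 -> 0 < D b ->
  (forall c, a <= c <= b -> D c = 0 -> exists d, is_derive D c d /\ d < 0) -> False.
Proof.
  intros Hab Hder Ha Hb Hc.
  set (S := fun s => a <= s <= b /\ D s <= 0).
  assert (Sb : bound S). { exists b. intros s [[_ ?] _]; auto. }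
  assert (Sne : exists s, S s). { exists a. split; [lra|auto]. }
  destruct (completeness S Sb Sne) as [c [Hub Hlub]].
  assert (Hac : a <= c) by (apply Hub; split; [lra|auto]).
  assert (Hcb : c <= b) by (apply Hlub; intros s [[_ ?] _]; auto).
  assert (Cc := cont_to_eps D c (ex_derive_continuous D c (Hder c))).
  assert (H1 : D c <= 0).
  { destruct (Rle_or_lt (D c) 0) as [|Hp]; auto. exfalso.
    destruct (Cc (D c) Hp) as [del [Hdel Hy]].
    assert (c <= c - del / 2).
    { apply Hlub. intros s Hs. destruct (Rle_or_lt s (c - del / 2)); auto.
      assert (Hsc : s <= c) by (apply Hub; auto).
      destruct Hs as [_ HDs]. assert (Hr : Rabs (s - c) < del) by (apply Rabs_lt_between; lra).
      specialize (Hy s Hr). apply Rabs_lt_between in Hy. lra. }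
    lra. }
  assert (H2 : 0 <= D c).
  { destruct (Rle_or_lt 0 (D c)) as [|Hn]; auto. exfalso.
    assert (c < b) by (destruct (Req_dec c b); [subst; lra| lra]).
    destruct (Cc (- D c) ltac:(lra)) as [del [Hdel Hy]].
    set (y := Rmin (c + del / 2) b).
    assert (c < y) by (unfold y; apply Rmin_glb_lt; lra).
    assert (y <= c + del / 2) by apply Rmin_l.
    assert (y <= b) by apply Rmin_r.
    assert (Hr : Rabs (y - c) < del) by (apply Rabs_lt_between; lra).
    specialize (Hy y Hr). apply Rabs_lt_between in Hy.
    assert (y <= c) by (apply Hub; split; [lra|lra]). lra. }
  assert (E : D c = 0) by lra.
  assert (c < b) by (destruct (Req_dec c b); [subst; lra| lra]).
  destruct (Hc c (conj Hac Hcb) E) as [d [Hd Hdn]].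
  destruct (der_local D c d Hd Hdn) as [del [Hdel Hl]].
  set (h := Rmin del (b - c) / 2).
  assert (Hh0 : 0 < h) by (unfold h; apply Rdiv_lt_0_compat; [apply Rmin_glb_lt|]; lra).
  assert (Hh1 : h < del) by (unfold h; pose proof (Rmin_l del (b - c)); lra).
  assert (h <= b - c) by (unfold h; pose proof (Rmin_r del (b - c)); lra).
  specialize (Hl h (conj Hh0 Hh1)).
  assert (c + h <= c) by (apply Hub; split; lra). lra.
Qed.

Section NC.
Variable Phi : R -> R -> R.
Variables K L : R.
Hypothesis HK : forall s x, Rabs (Phi s x) <= K.
Hypothesis HL0 : 0 < L.
Hypothesis HL : forall s x y, Rabs (Phi s x - Phi s y) <= L * Rabs (x - y).

Lemma noncross (g1 g2 : R -> R) a b :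
  (forall t, is_derive g1 t (Phi t (g1 t))) ->
  (forall t, is_derive g2 t (Phi t (g2 t))) ->
  g1 b < g2 b -> g1 a < g2 a.
Proof.
  intros H1 H2 Hb. destruct (Rlt_or_le (g1 a) (g2 a)) as [|Ha]; auto. exfalso.
  destruct (IVT_gen (fun t => g2 t - g1 t) a b 0) as [c [_ Hc]].
  { intros x. apply der_cont_pt with (Phi x (g2 x) - Phi x (g1 x)). apply der_minus; auto. }
  { split. eapply Rle_trans; [apply Rmin_l|]; lra. eapply Rle_trans; [|apply Rmax_r]; lra. }
  assert (E : g1 c = g2 c) by lra.
  pose proof (ode_unique Phi K L HK HL0 HL g1 g2 c H1 H2 E b). lra.
Qed.
End NC.

Lemma list_bound (f : Compactness.Tn 2 R -> R) (l : list (Compactness.Tn 2 R)) :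
  exists B, forall t, List.In t l -> f t <= B.
Proof.
  induction l as [|x l [B HB]]. exists 0; intros t [].
  exists (Rmax (f x) B). intros t [<-|Ht]. apply Rmax_l.
  eapply Rle_trans; [apply HB; auto| apply Rmax_r].
Qed.

Lemma bounded2d (P : R * R -> R) a b a' b' :
  (forall u v, a <= u <= b -> a' <= v <= b' -> continuous P (u, v)) ->
  exists B, forall u v, a <= u <= b -> a' <= v <= b' -> Rabs (P (u, v)) <= B.
Proof.
  intros HP.
  set (inr := fun t : Compactness.Tn 2 R => let '(u, (v, _)) := t in a <= u <= b /\ a' <= v <= b').
  set (pt := fun t : Compactness.Tn 2 R => let '(u, (v, _)) := t in (u, v)).
  assert (Hd : forall t, exists d : posreal, inr t -> forall q, ball (pt t) d q -> Rabs (P q - P (pt t)) < 1).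
  { intros [u [v []]]. simpl.
    destruct (classic (a <= u <= b /\ a' <= v <= b')) as [[H1 H2]|Hn].
    - specialize (HP u v H1 H2). apply filterlim_locally with (eps := mkposreal 1 Rlt_0_1) in HP.
      destruct HP as [d Hd]. exists d. intros _ q Hq. apply (Hd q Hq).
    - exists (mkposreal 1 Rlt_0_1). intros H; contradiction. }
  set (delta := fun t => proj1_sig (constructive_indefinite_description _ (Hd t))).
  assert (Hdelta : forall t, inr t -> forall q, ball (pt t) (delta t) q -> Rabs (P q - P (pt t)) < 1).
  { intros t. unfold delta. destruct (constructive_indefinite_description _ (Hd t)) as [d Hd']. exact Hd'. }
  apply NNPP. intros Hn.
  apply (Compactness.compactness_list 2 (a, (a', tt)) (b, (b', tt)) delta). intros [l Hl].
  apply Hn. destruct (list_bound (fun t => Rabs (P (pt t)) + 1) l) as [B HB].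
  exists B. intros u v Hu Hv.
  destruct (Hl (u, (v, tt))) as [t [Hin [Hbt Hct]]]. { simpl. tauto. }
  destruct t as [t1 [t2 []]]. simpl in Hbt, Hct.
  assert (Hq : ball (pt (t1, (t2, tt))) (delta (t1, (t2, tt))) (u, v)).
  { simpl. split; simpl; unfold ball; simpl; unfold AbsRing_ball; simpl; unfold abs, minus, plus, opp; simpl.
    - apply Hct.
    - apply Hct. }
  assert (Hin2 : inr (t1, (t2, tt))) by (simpl; destruct Hbt as [? [? _]]; split; assumption). specialize (Hdelta _ Hin2 _ Hq). specialize (HB _ Hin). simpl in HB, Hdelta.
  pose proof (Rabs_triang_inv (P (u, v)) (P (t1, t2))). lra.
Qed.

Lemma der_local2 (f : R -> R) c d : is_derive f c d -> d < 0 ->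
  exists del, 0 < del /\ forall h, 0 < h < del -> f (c + h) < f c /\ f c < f (c - h).
Proof.
  intros H Hd. apply is_derive_Reals in H.
  destruct (H (- d / 2) ltac:(lra)) as [del Hdel].
  exists del. split; [apply cond_pos|]. intros h Hh. split.
  - assert (h <> 0) by lra. assert (Rabs h < del) by (rewrite Rabs_right; lra).
    specialize (Hdel h H0 H1). apply Rabs_lt_between in Hdel.
    destruct Hdel as [_ Hu].
    assert ((f (c + h) - f c) / h < d / 2) by lra.
    apply Rmult_lt_compat_r with (r := h) in H2; [|lra].
    field_simplify in H2; [|lra]. nra.
  - assert (-h <> 0) by lra. assert (Rabs (-h) < del) by (rewrite Rabs_Ropp, Rabs_right; lra).
    specialize (Hdel (-h) H0 H1). apply Rabs_lt_between in Hdel.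
    destruct Hdel as [_ Hu].
    assert ((f (c + - h) - f c) / - h < d / 2) by lra.
    apply Rmult_lt_compat_r with (r := h) in H2; [|lra].
    replace ((f (c + - h) - f c) / - h * h) with (f c - f (c + - h)) in H2 by (field; lra).
    replace (c - h) with (c + - h) by ring. nra.
Qed.

Lemma mono_lim (f : R -> R) v0 B :
  (forall x y, v0 <= x -> x < y -> f x < f y) -> (forall x, v0 <= x -> f x <= B) ->
  exists l : R, is_lim f p_infty l /\ (forall x, v0 <= x -> f x <= l) /\
     (forall B', (forall x, v0 <= x -> f x <= B') -> l <= B').
Proof.
  intros Hinc HB.
  set (E := fun y => exists x, v0 <= x /\ y = f x).
  assert (Eb : bound E) by (exists B; intros y [x [Hx ->]]; auto).
  assert (Ene : exists y, E y) by (exists (f v0); exists v0; split; [lra|auto]).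
  destruct (completeness E Eb Ene) as [l [Hub Hlub]].
  assert (H1 : forall x, v0 <= x -> f x <= l) by (intros x Hx; apply Hub; exists x; auto).
  exists l. split; [|split; auto].
  - apply is_lim_spec. intros eps. simpl.
    destruct (classic (exists x, v0 <= x /\ l - eps < f x)) as [[x1 [Hx1 Hf1]]|Hn].
    + exists x1. intros x Hx. specialize (Hinc x1 x Hx1 Hx). specialize (H1 x ltac:(lra)).
      apply Rabs_lt_between. lra.
    + exfalso. assert (l <= l - eps).
      { apply Hlub. intros y [x [Hx ->]]. destruct (Rle_or_lt (f x) (l - eps)); auto.
        exfalso; apply Hn; exists x; auto. }
      pose proof (cond_pos eps). lra.
  - intros B' HB'. apply Hlub. intros y [x [Hx ->]]. auto.
Qed.

Definition clamp (a b x : R) := Rmax a (Rmin b x).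

Lemma clamp_in a b x : a <= b -> a <= clamp a b x <= b.
Proof. intros. unfold clamp, Rmax, Rmin. repeat destruct Rle_dec; lra. Qed.
Lemma clamp_id a b x : a <= x <= b -> clamp a b x = x.
Proof. intros. unfold clamp, Rmax, Rmin. repeat destruct Rle_dec; lra. Qed.
Lemma clamp_lip a b x y : Rabs (clamp a b x - clamp a b y) <= Rabs (x - y).
Proof.
  unfold clamp, Rmax, Rmin. repeat destruct Rle_dec;
  repeat (try rewrite Rminus_eq_0; try rewrite Rabs_R0); try apply Rabs_pos;
  apply Rabs_le; pose proof (Rabs_le_between (x - y) (Rabs (x - y))) as [H _];
  specialize (H (Rle_refl _)); lra.
Qed.
Lemma clamp_cont a b (g : R -> R) t : continuous g t -> continuous (fun s => clamp a b (g s)) t.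
Proof.
  intros Hg. apply (continuous_comp g (clamp a b)); auto.
  apply cont_lip with 1. intros y. rewrite Rmult_1_l. apply clamp_lip.
Qed.

Lemma cont_mult (f g : R -> R) t : continuous f t -> continuous g t -> continuous (fun y => f y * g y) t.
Proof. intros. exact (continuous_mult f g t H H0). Qed.
Lemma cont_minus (f g : R -> R) t : continuous f t -> continuous g t -> continuous (fun y => f y - g y) t.
Proof. intros. exact (continuous_minus f g t H H0). Qed.

Lemma abs_mul_le a b A B : Rabs a <= A -> Rabs b <= B -> Rabs (a * b) <= A * B.
Proof. intros. rewrite Rabs_mult. apply Rmult_le_compat; auto; apply Rabs_pos. Qed.
Lemma abs_add_le a b A B : Rabs a <= A -> Rabs b <= B -> Rabs (a + b) <= A + B.
Proof. intros. eapply Rle_trans; [apply Rabs_triang|]. lra. Qed.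

Section Main.
Variables (A F : R -> R -> R) (rp rm : R -> R) (rc v0 : R) (U : R -> R -> R).
Hypothesis HAsm : smooth_vr A.
Hypothesis HFsm : smooth_vr F.
Hypothesis HApos : forall v r, 0 <= r -> 0 < A v r.
Hypothesis HFpos : forall v r, 0 <= r -> 0 < F v r.
Hypothesis Hroots : forall v, 0 < rm v < rp v.
Hypothesis Hrp_dec : forall v, exists d, is_derive rp v d /\ d < 0.
Hypothesis Hrm_inc : forall v, exists d, is_derive rm v d /\ 0 < d.
Hypothesis Hrp_lim : is_lim rp p_infty rc.
Hypothesis Hrm_lim : is_lim rm p_infty rc.
Hypothesis HU : compactified_U A F rp rm rc v0 U.

Lemma drp_spec v : is_derive rp v (Derive rp v) /\ Derive rp v < 0.
Proof. destruct (Hrp_dec v) as [d [H1 H2]]. rewrite (is_derive_unique _ _ _ H1). auto. Qed.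
Lemma drm_spec v : is_derive rm v (Derive rm v) /\ 0 < Derive rm v.
Proof. destruct (Hrm_inc v) as [d [H1 H2]]. rewrite (is_derive_unique _ _ _ H1). auto. Qed.

Lemma rp_decr x y : x < y -> rp y < rp x.
Proof.
  intros H. assert (- rp x < - rp y); [|lra].
  apply (incr_function (fun v => - rp v) m_infty p_infty (fun v => - Derive rp v)); simpl; auto.
  - intros v _ _. exact (is_derive_opp rp v _ (proj1 (drp_spec v))).
  - intros v _ _. pose proof (proj2 (drp_spec v)). lra.
Qed.
Lemma rm_incr x y : x < y -> rm x < rm y.
Proof.
  intros H.
  apply (incr_function rm m_infty p_infty (fun v => Derive rm v)); simpl; auto.
  - intros v _ _. apply drm_spec.
  - intros v _ _. apply drm_spec.
Qed.

Lemma rp_gt v : rc < rp v.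
Proof.
  destruct (Rlt_or_le rc (rp v)) as [|Hle]; auto. exfalso.
  pose proof (rp_decr v (v + 1) ltac:(lra)).
  apply is_lim_spec in Hrp_lim. specialize (Hrp_lim (mkposreal (rc - rp (v + 1)) ltac:(lra))).
  destruct Hrp_lim as [M HM]. set (x := Rmax (M + 1) (v + 2)).
  assert (M < x) by (unfold x; pose proof (Rmax_l (M + 1) (v + 2)); lra).
  assert (v + 1 < x) by (unfold x; pose proof (Rmax_r (M + 1) (v + 2)); lra).
  specialize (HM x H0). pose proof (rp_decr _ _ H1). simpl in HM.
  apply Rabs_lt_between in HM. lra.
Qed.
Lemma rm_lt v : rm v < rc.
Proof.
  destruct (Rlt_or_le (rm v) rc) as [|Hle]; auto. exfalso.
  pose proof (rm_incr v (v + 1) ltac:(lra)).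
  apply is_lim_spec in Hrm_lim. specialize (Hrm_lim (mkposreal (rm (v + 1) - rc) ltac:(lra))).
  destruct Hrm_lim as [M HM]. set (x := Rmax (M + 1) (v + 2)).
  assert (M < x) by (unfold x; pose proof (Rmax_l (M + 1) (v + 2)); lra).
  assert (v + 1 < x) by (unfold x; pose proof (Rmax_r (M + 1) (v + 2)); lra).
  specialize (HM x H0). pose proof (rm_incr _ _ H1). simpl in HM.
  apply Rabs_lt_between in HM. lra.
Qed.
Lemma rc_pos : 0 < rc.
Proof. pose proof (rm_lt v0). pose proof (Hroots v0). lra. Qed.

Definition phi := outgoing_rhs A F rp rm.

Lemma A_cont2 p : continuous (fun p : R * R => A (fst p) (snd p)) p.
Proof. destruct p as [a b]. exact (proj2 HAsm 0%nat a b). Qed.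
Lemma F_cont2 p : continuous (fun p : R * R => F (fst p) (snd p)) p.
Proof. destruct p as [a b]. exact (proj2 HFsm 0%nat a b). Qed.

Lemma phi_cont (sg xi : R -> R) t : continuous sg t -> continuous xi t ->
  continuous (fun s => phi (sg s) (xi s)) t.
Proof.
  intros Hs Hx. unfold phi, outgoing_rhs.
  assert (Crp : continuous (fun s => rp (sg s)) t).
  { apply (continuous_comp sg rp); auto. apply (ex_derive_continuous rp). eexists; apply drp_spec. }
  assert (Crm : continuous (fun s => rm (sg s)) t).
  { apply (continuous_comp sg rm); auto. apply (ex_derive_continuous rm). eexists; apply drm_spec. }
  assert (CA : continuous (fun s => A (sg s) (xi s)) t).
  { apply (continuous_comp_2 sg xi A); auto. apply A_cont2. }
  assert (CF : continuous (fun s => F (sg s) (xi s)) t).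
  { apply (continuous_comp_2 sg xi F); auto. apply F_cont2. }
  apply cont_mult; [apply cont_mult; [apply cont_mult|]|]; try apply cont_minus; auto.
  apply continuous_const. apply cont_mult; auto.
Qed.

Definition lo := rm v0.
Definition hi := rp v0.

Lemma rp_range s : v0 <= s -> lo <= rp s <= hi.
Proof.
  intros H. unfold lo, hi. pose proof (rp_gt s). pose proof (rm_lt v0).
  destruct (Req_dec s v0) as [->|Hn]; [lra|]. pose proof (rp_decr v0 s ltac:(lra)). lra.
Qed.
Lemma rm_range s : v0 <= s -> lo <= rm s <= hi.
Proof.
  intros H. unfold lo, hi. pose proof (rm_lt s). pose proof (rp_gt v0).
  destruct (Req_dec s v0) as [->|Hn]; [lra|]. pose proof (rm_incr v0 s ltac:(lra)). lra.
Qed.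
Lemma lo_lt_hi : lo < hi.
Proof. unfold lo, hi. apply Hroots. Qed.
Lemma lo_pos : 0 < lo.
Proof. unfold lo. apply Hroots. Qed.

Lemma rect_bounds V : exists BA BF BdA BdF, forall s z, v0 <= s <= V -> lo <= z <= hi ->
  Rabs (A s z) <= BA /\ Rabs (F s z) <= BF /\ Rabs (Derive (A s) z) <= BdA /\ Rabs (Derive (F s) z) <= BdF.
Proof.
  destruct (bounded2d (fun p => Derive_n (A (fst p)) 0 (snd p)) v0 V lo hi) as [BA HA].
  { intros; apply (proj2 HAsm). }
  destruct (bounded2d (fun p => Derive_n (F (fst p)) 0 (snd p)) v0 V lo hi) as [BF HF].
  { intros; apply (proj2 HFsm). }
  destruct (bounded2d (fun p => Derive_n (A (fst p)) 1 (snd p)) v0 V lo hi) as [BdA HdA].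
  { intros; apply (proj2 HAsm). }
  destruct (bounded2d (fun p => Derive_n (F (fst p)) 1 (snd p)) v0 V lo hi) as [BdF HdF].
  { intros; apply (proj2 HFsm). }
  exists BA, BF, BdA, BdF. intros s z Hs Hz.
  split; [apply (HA s z Hs Hz)|]. split; [apply (HF s z Hs Hz)|].
  split; [apply (HdA s z Hs Hz)| apply (HdF s z Hs Hz)].
Qed.

Definition dphi s z := / 2 * ((Derive (A s) z * F s z + A s z * Derive (F s) z) * (z - rp s) * (z - rm s)
   + (A s z * F s z) * ((z - rm s) + (z - rp s))).

Lemma phi_deriv s z : is_derive (fun z => phi s z) z (dphi s z).
Proof.
  unfold phi, outgoing_rhs, dphi.
  assert (EA : ex_derive (A s) z) by exact (proj1 HAsm 1%nat s z).
  assert (EF : ex_derive (F s) z) by exact (proj1 HFsm 1%nat s z).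
  auto_derive. { repeat split; auto. } change (fun x : R => A s x) with (A s). change (fun x : R => F s x) with (F s). field.
Qed.

Lemma phi_bounds V : v0 <= V -> exists K L, 0 < L /\ forall s z1 z2, v0 <= s <= V ->
  lo <= z1 <= hi -> lo <= z2 <= hi ->
  Rabs (phi s z1) <= K /\ Rabs (phi s z1 - phi s z2) <= L * Rabs (z1 - z2).
Proof.
  intros HV. destruct (rect_bounds V) as [BA [BF [BdA [BdF HB]]]].
  set (Wd := hi - lo).
  assert (Hp : forall s z, v0 <= s <= V -> lo <= z <= hi -> Rabs (z - rp s) <= Wd /\ Rabs (z - rm s) <= Wd).
  { intros s z Hs Hz. pose proof (rp_range s ltac:(lra)). pose proof (rm_range s ltac:(lra)).
    unfold Wd. split; apply Rabs_le; lra. }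
  exists (/ 2 * (BA * BF) * Wd * Wd).
  exists (/ 2 * ((BdA * BF + BA * BdF) * Wd * Wd + (BA * BF) * (Wd + Wd)) + 1).
  assert (P0 : 0 <= / 2 * ((BdA * BF + BA * BdF) * Wd * Wd + (BA * BF) * (Wd + Wd))).
  { pose proof lo_lt_hi. destruct (HB v0 lo ltac:(lra) ltac:(lra)) as [h1 [h2 [h3 h4]]].
    pose proof (Rabs_pos (A v0 lo)). pose proof (Rabs_pos (F v0 lo)).
    pose proof (Rabs_pos (Derive (A v0) lo)). pose proof (Rabs_pos (Derive (F v0) lo)).
    assert (0 <= Wd) by (unfold Wd; lra).
    assert (0 <= BA * BF) by (apply Rmult_le_pos; lra).
    assert (0 <= BdA * BF + BA * BdF) by (apply Rplus_le_le_0_compat; apply Rmult_le_pos; lra).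
    apply Rmult_le_pos; [lra|]. apply Rplus_le_le_0_compat; repeat apply Rmult_le_pos; lra. }
  split; [lra|].
  intros s z1 z2 Hs Hz1 Hz2. split.
  - unfold phi, outgoing_rhs. destruct (HB s z1 Hs Hz1) as [h1 [h2 _]]. destruct (Hp s z1 Hs Hz1).
    apply abs_mul_le; auto. apply abs_mul_le; auto. apply abs_mul_le.
    rewrite Rabs_right; [lra| lra]. apply abs_mul_le; auto.
  - destruct (MVT_gen (fun z => phi s z) z2 z1 (dphi s)) as [c [Hc Hm]].
    { intros; apply phi_deriv. }
    { intros; apply der_cont_pt with (dphi s x); apply phi_deriv. }
    assert (Hc' : lo <= c <= hi).
    { destruct Hc. split.
      - eapply Rle_trans; [|apply H]. apply Rmin_glb; lra.
      - eapply Rle_trans; [apply H0|]. apply Rmax_lub; lra. }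
    rewrite Hm, Rabs_mult. apply Rmult_le_compat_r; [apply Rabs_pos|].
    destruct (HB s c Hs Hc') as [h1 [h2 [h3 h4]]]. destruct (Hp s c Hs Hc').
    assert (Rabs (dphi s c) <= / 2 * ((BdA * BF + BA * BdF) * Wd * Wd + (BA * BF) * (Wd + Wd))); [|lra].
    unfold dphi. apply abs_mul_le. rewrite Rabs_right; lra.
    apply abs_add_le. apply abs_mul_le; auto. apply abs_mul_le; auto.
    apply abs_add_le; apply abs_mul_le; auto.
    apply abs_mul_le; [apply abs_mul_le; auto| apply abs_add_le; auto].
Qed.

Definition Phi V s x := phi (clamp v0 V s) (clamp lo hi x).

Lemma Phi_props V : v0 <= V -> exists K L, 0 < L /\ (forall s x, Rabs (Phi V s x) <= K) /\ (forall s x y, Rabs (Phi V s x - Phi V s y) <= L * Rabs (x - y)).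
Proof.
  intros HV. destruct (phi_bounds V HV) as [K [L [HL H]]]. exists K, L. split; auto.
  pose proof lo_lt_hi.
  split.
  - intros s x. unfold Phi. apply (H _ _ (clamp lo hi x)); apply clamp_in; lra.
  - intros s x y. unfold Phi. eapply Rle_trans. apply (H _ _ _); apply clamp_in; lra.
    apply Rmult_le_compat_l; [lra| apply clamp_lip].
Qed.

Lemma Phi_cont V g : (forall t, continuous g t) -> forall t, continuous (fun s => Phi V s (g s)) t.
Proof.
  intros Hg t. unfold Phi. apply (phi_cont (fun s => clamp v0 V s) (fun s => clamp lo hi (g s))).
  apply (clamp_cont v0 V (fun s => s)). apply continuous_id.
  apply clamp_cont; auto.
Qed.

Lemma Phi_eq V s x : v0 <= s <= V -> lo <= x <= hi -> Phi V s x = phi s x.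
Proof. intros. unfold Phi. rewrite !clamp_id; auto. Qed.


Lemma phi_rp s : phi s (rp s) = 0.
Proof. unfold phi, outgoing_rhs. ring. Qed.
Lemma phi_rm s : phi s (rm s) = 0.
Proof. unfold phi, outgoing_rhs. ring. Qed.
Lemma phi_rc s : phi s rc < 0.
Proof.
  unfold phi, outgoing_rhs. pose proof rc_pos. pose proof (HApos s rc ltac:(lra)).
  pose proof (HFpos s rc ltac:(lra)). pose proof (rp_gt s). pose proof (rm_lt s).
  assert (0 < A s rc * F s rc) by (apply Rmult_lt_0_compat; lra).
  assert (0 < / 2 * (A s rc * F s rc)) by (apply Rmult_lt_0_compat; lra).
  assert (0 < / 2 * (A s rc * F s rc) * (rc - rm s)) by (apply Rmult_lt_0_compat; lra).
  nra.
Qed.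
Lemma rc_range : lo < rc < hi.
Proof. unfold lo, hi. split; [apply rm_lt| apply rp_gt]. Qed.

Definition sol V g := forall t, is_derive g t (Phi V t (g t)).

Lemma pick_before (f : R -> R) v s1 d : s1 < v -> is_derive f v d -> d < 0 ->
  exists s2, s1 < s2 < v /\ f v < f s2.
Proof.
  intros Hs Hd Hn. destruct (der_local2 f v d Hd Hn) as [del [Hdel H]].
  set (h := Rmin del (v - s1) / 2).
  assert (0 < h) by (unfold h; apply Rdiv_lt_0_compat; [apply Rmin_glb_lt|]; lra).
  assert (h < del) by (unfold h; pose proof (Rmin_l del (v - s1)); lra).
  assert (h < v - s1) by (unfold h; pose proof (Rmin_r del (v - s1)); lra).
  exists (v - h). split; [lra|]. apply H; lra.
Qed.

Lemma geoP V v g : v0 <= v <= V -> sol V g -> g v = rp v ->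
  (forall s, v0 <= s < v -> g s < rp s) /\ (forall s, v0 <= s <= v -> rc < g s <= rp s).
Proof.
  intros Hv Hg Hgv.
  assert (Dd : forall x, is_derive (fun s => rp s - g s) x (Derive rp x - Phi V x (g x))).
  { intros x. apply der_minus; [apply drp_spec| apply Hg]. }
  assert (HA : forall s, v0 <= s < v -> g s < rp s).
  { intros s1 Hs1. destruct (Rlt_or_le (g s1) (rp s1)) as [|Hle]; auto. exfalso.
    destruct (pick_before (fun s => rp s - g s) v s1 _ ltac:(lra) (Dd v)) as [s2 [Hs2 Hf]].
    { rewrite Hgv, Phi_eq, phi_rp. pose proof (proj2 (drp_spec v)); lra. lra. apply rp_range; lra. }
    apply (barrier (fun s => rp s - g s) s1 s2); try lra.
    - intros x; eexists; apply Dd.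
    - intros c Hc E. exists (Derive rp c - Phi V c (g c)). split; [apply Dd|].
      replace (g c) with (rp c) by lra. rewrite Phi_eq, phi_rp. pose proof (proj2 (drp_spec c)); lra.
      lra. apply rp_range; lra. }
  split; auto.
  assert (HB : forall s, v0 <= s <= v -> rc < g s).
  { intros s1 Hs1. destruct (Rlt_or_le rc (g s1)) as [|Hle]; auto. exfalso.
    assert (s1 < v). { destruct (Req_dec s1 v); [subst; pose proof (rp_gt v); lra| lra]. }
    apply (barrier (fun s => g s - rc) s1 v); try lra.
    - intros x; eexists; apply der_minus; [apply Hg| apply der_const].
    - pose proof (rp_gt v). lra.
    - intros c Hc E. exists (Phi V c (g c) - 0). split; [apply der_minus; [apply Hg| apply der_const]|].
      replace (g c) with rc by lra. rewrite Phi_eq. pose proof (phi_rc c); lra.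
      lra. pose proof rc_range; lra. }
  intros s Hs. split; [apply HB; auto|].
  destruct (Req_dec s v) as [->|]; [lra|]. left; apply HA; lra.
Qed.

Lemma geoM V v g : v0 <= v <= V -> sol V g -> g v = rm v ->
  (forall s, v0 <= s < v -> rm s < g s) /\ (forall s, v0 <= s <= v -> rm s <= g s <= rp s).
Proof.
  intros Hv Hg Hgv.
  assert (Ed : forall x, is_derive (fun s => g s - rm s) x (Phi V x (g x) - Derive rm x)).
  { intros x. apply der_minus; [apply Hg| apply drm_spec]. }
  assert (HA : forall s, v0 <= s < v -> rm s < g s).
  { intros s1 Hs1. destruct (Rlt_or_le (rm s1) (g s1)) as [|Hle]; auto. exfalso.
    destruct (pick_before (fun s => g s - rm s) v s1 _ ltac:(lra) (Ed v)) as [s2 [Hs2 Hf]].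
    { rewrite Hgv, Phi_eq, phi_rm. pose proof (proj2 (drm_spec v)); lra. lra. apply rm_range; lra. }
    apply (barrier (fun s => g s - rm s) s1 s2); try lra.
    - intros x; eexists; apply Ed.
    - intros c Hc E. exists (Phi V c (g c) - Derive rm c). split; [apply Ed|].
      replace (g c) with (rm c) by lra. rewrite Phi_eq, phi_rm. pose proof (proj2 (drm_spec c)); lra.
      lra. apply rm_range; lra. }
  split; auto.
  assert (Dd : forall x, is_derive (fun s => rp s - g s) x (Derive rp x - Phi V x (g x))).
  { intros x. apply der_minus; [apply drp_spec| apply Hg]. }
  assert (HB : forall s, v0 <= s <= v -> g s <= rp s).
  { intros s1 Hs1. destruct (Rle_or_lt (g s1) (rp s1)) as [|Hlt]; auto. exfalso.
    assert (s1 < v). { destruct (Req_dec s1 v); [subst; pose proof (Hroots v); lra| lra]. }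
    apply (barrier (fun s => rp s - g s) s1 v); try lra.
    - intros x; eexists; apply Dd.
    - pose proof (Hroots v). lra.
    - intros c Hc E. exists (Derive rp c - Phi V c (g c)). split; [apply Dd|].
      replace (g c) with (rp c) by lra. rewrite Phi_eq, phi_rp. pose proof (proj2 (drp_spec c)); lra.
      lra. apply rp_range; lra. }
  intros s Hs. split; [|apply HB; auto].
  destruct (Req_dec s v) as [->|]; [lra|]. left; apply HA; lra.
Qed.

Lemma Uval V v g : v0 <= v <= V -> sol V g -> (forall s, v0 <= s <= v -> lo <= g s <= hi) ->
  U v (g v) = U v0 (g v0).
Proof.
  intros Hv Hg Hin. destruct HU as [_ [_ H3]].
  apply (H3 g v0 v ltac:(lra)); [|lra].
  intros s Hs. specialize (Hin s Hs). split. pose proof lo_pos; lra.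
  change (outgoing_rhs A F rp rm s (g s)) with (phi s (g s)). rewrite <- (Phi_eq V s (g s)); [apply Hg|lra|auto].
Qed.


Lemma sol_exists V t0 x0 : v0 <= V -> exists g, sol V g /\ g t0 = x0.
Proof.
  intros HV. destruct (Phi_props V HV) as [K [L [HL0 [HK HL]]]].
  destruct (ode_exists (Phi V) K L HK HL0 HL (Phi_cont V) t0 x0) as [g [H1 H2]].
  exists g; split; auto.
Qed.

Lemma noncrossV V g1 g2 a b : v0 <= V -> sol V g1 -> sol V g2 -> g1 b < g2 b -> g1 a < g2 a.
Proof.
  intros HV H1 H2 Hb. destruct (Phi_props V HV) as [K [L [HL0 [HK HL]]]].
  exact (noncross (Phi V) K L HK HL0 HL g1 g2 a b H1 H2 Hb).
Qed.

Definition Uf r := - (2 / PI * atan (r / rc)).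

Lemma Uf_dec r1 r2 : r1 < r2 -> Uf r2 < Uf r1.
Proof.
  intros H. unfold Uf. pose proof rc_pos. pose proof PI_RGT_0.
  assert (r1 / rc < r2 / rc) by (apply Rmult_lt_compat_r; [apply Rinv_0_lt_compat|]; lra).
  apply atan_increasing in H2.
  assert (0 < 2 / PI) by (apply Rdiv_lt_0_compat; lra). nra.
Qed.
Lemma Uf_bounds r : -1 < Uf r < 1.
Proof.
  unfold Uf. pose proof (atan_bound (r / rc)). pose proof PI_RGT_0.
  assert (2 / PI * atan (r / rc) < 1).
  { apply Rmult_lt_reg_l with (PI / 2). lra. field_simplify; lra. }
  assert (-1 < 2 / PI * atan (r / rc)).
  { apply Rmult_lt_reg_l with (PI / 2). lra. field_simplify; lra. }
  lra.
Qed.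
Lemma U_v0 r : 0 < r -> U v0 r = Uf r.
Proof. intros H. destruct HU as [_ [H2 _]]. apply H2; auto. Qed.

Definition Pv v := U v (rp v).
Definition Mv v := U v (rm v).

Lemma P_repr V v g : v0 <= v <= V -> sol V g -> g v = rp v -> rc < g v0 /\ Pv v = Uf (g v0).
Proof.
  intros Hv Hg Hgv. destruct (geoP V v g Hv Hg Hgv) as [_ H2].
  pose proof (H2 v0 ltac:(lra)). split; [lra|].
  unfold Pv. rewrite <- Hgv. rewrite (Uval V v g Hv Hg).
  - apply U_v0. pose proof rc_pos; lra.
  - intros s Hs. specialize (H2 s Hs). pose proof rc_range. pose proof (rp_range s ltac:(lra)). lra.
Qed.
Lemma M_repr V v g : v0 <= v <= V -> sol V g -> g v = rm v -> lo <= g v0 /\ Mv v = Uf (g v0).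
Proof.
  intros Hv Hg Hgv. destruct (geoM V v g Hv Hg Hgv) as [_ H2].
  pose proof (H2 v0 ltac:(lra)). split; [unfold lo; lra|].
  unfold Mv. rewrite <- Hgv. rewrite (Uval V v g Hv Hg).
  - apply U_v0. pose proof lo_pos; unfold lo in *; lra.
  - intros s Hs. specialize (H2 s Hs). pose proof (rm_range s ltac:(lra)). pose proof (rp_range s ltac:(lra)). lra.
Qed.

Lemma P_incr v w : v0 <= v -> v < w -> Pv v < Pv w.
Proof.
  intros Hv Hw.
  destruct (sol_exists w v (rp v) ltac:(lra)) as [gv [Hgv Ev]].
  destruct (sol_exists w w (rp w) ltac:(lra)) as [gw [Hgw Ew]].
  destruct (P_repr w v gv ltac:(lra) Hgv Ev) as [_ ->].
  destruct (P_repr w w gw ltac:(lra) Hgw Ew) as [_ ->].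
  apply Uf_dec. apply (noncrossV w gw gv v0 v); auto; try lra.
  destruct (geoP w w gw ltac:(lra) Hgw Ew) as [H1 _]. rewrite Ev. apply H1. lra.
Qed.
Lemma M_decr v w : v0 <= v -> v < w -> Mv w < Mv v.
Proof.
  intros Hv Hw.
  destruct (sol_exists w v (rm v) ltac:(lra)) as [gv [Hgv Ev]].
  destruct (sol_exists w w (rm w) ltac:(lra)) as [gw [Hgw Ew]].
  destruct (M_repr w v gv ltac:(lra) Hgv Ev) as [_ ->].
  destruct (M_repr w w gw ltac:(lra) Hgw Ew) as [_ ->].
  apply Uf_dec. apply (noncrossV w gv gw v0 v); auto; try lra.
  destruct (geoM w w gw ltac:(lra) Hgw Ew) as [H1 _]. rewrite Ev. apply H1. lra.
Qed.
Lemma PM v : v0 <= v -> Pv v < Mv v.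
Proof.
  intros Hv.
  destruct (sol_exists v v (rp v) ltac:(lra)) as [g [Hg Eg]].
  destruct (sol_exists v v (rm v) ltac:(lra)) as [k [Hk Ek]].
  destruct (P_repr v v g ltac:(lra) Hg Eg) as [_ ->].
  destruct (M_repr v v k ltac:(lra) Hk Ek) as [_ ->].
  apply Uf_dec. apply (noncrossV v k g v0 v); auto; try lra.
  rewrite Eg, Ek. apply Hroots.
Qed.
Lemma PM2 v w : v0 <= v -> v0 <= w -> Pv v < Mv w.
Proof.
  intros Hv Hw. destruct (Rle_or_lt v w) as [H|H].
  - destruct (Req_dec v w) as [->|]. apply PM; auto.
    pose proof (P_incr v w Hv ltac:(lra)). pose proof (PM w Hw). lra.
  - pose proof (M_decr w v Hw H). pose proof (PM v Hv). lra.
Qed.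

Lemma main_result : exists Upinf Uminf : R,
    is_lim (fun v => U v (rp v)) p_infty Upinf /\
    is_lim (fun v => U v (rm v)) p_infty Uminf /\
    -1 < U v0 (rp v0) /\ U v0 (rp v0) < Upinf /\ Upinf <= Uminf /\
    Uminf < U v0 (rm v0) /\ U v0 (rm v0) < 1 /\
    (type1 Upinf Uminf \/ type2 Upinf Uminf).
Proof.
  destruct (mono_lim Pv v0 (Mv v0)) as [Lp [HLp [HPl HPlub]]].
  { apply P_incr. }
  { intros x Hx. left. apply PM2; lra. }
  destruct (mono_lim (fun v => - Mv v) v0 (- Pv v0)) as [l' [Hl' [HMl HMlub]]].
  { intros x y Hx Hxy. pose proof (M_decr x y Hx Hxy). lra. }
  { intros x Hx. pose proof (PM2 v0 x ltac:(lra) Hx). lra. }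
  exists Lp, (- l').
  assert (HLm : is_lim Mv p_infty (- l')).
  { apply is_lim_opp in Hl'. simpl in Hl'. eapply is_lim_ext; [|exact Hl']. intros y; simpl; ring. }
  assert (Hle : Lp <= - l').
  { apply HPlub. intros x Hx. assert (l' <= - Pv x); [|lra].
    apply HMlub. intros y Hy. pose proof (PM2 x y Hx Hy). lra. }
  pose proof (rp_gt v0). pose proof rc_pos. pose proof lo_pos.
  split; [exact HLp|]. split; [exact HLm|].
  split. { rewrite U_v0 by lra. apply Uf_bounds. }
  split. { pose proof (P_incr v0 (v0 + 1) ltac:(lra) ltac:(lra)). pose proof (HPl (v0 + 1) ltac:(lra)).
           unfold Pv in *. lra. }
  split; [exact Hle|].
  split. { pose proof (M_decr v0 (v0 + 1) ltac:(lra) ltac:(lra)). pose proof (HMl (v0 + 1) ltac:(lra)).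
           unfold Mv in *. lra. }
  split. { unfold lo in *. rewrite U_v0 by lra. apply Uf_bounds. }
  unfold type1, type2. destruct Hle; [right|left]; auto.
Qed.

End Main.

Theorem theorem2
  (f A F : R -> R -> R) (rp rm : R -> R) (rc v0 : R) (U : R -> R -> R)
  (* regularity *)
  (HAsm : smooth_vr A) (HFsm : smooth_vr F)
  (* metric functions *)
  (HApos : forall v r, 0 <= r -> 0 < A v r)
  (HAinf : forall v, is_lim (A v) p_infty 1)
  (Hfinf : forall v, is_lim (f v) p_infty 1)
  (Hf0 : forall v, f v 0 = 1)
  (Hdf0 : forall v, is_derive (f v) 0 0)
  (HdA0 : forall v, is_derive (A v) 0 0)
  (* exactly two roots r_-(v) < r_+(v), f = F (r - r_+)(r - r_-), F > 0 *)
  (Hroots : forall v, 0 < rm v < rp v)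
  (Hfact : forall v r, 0 <= r -> f v r = F v r * (r - rp v) * (r - rm v))
  (HFpos : forall v r, 0 <= r -> 0 < F v r)
  (* (1) d_v r_+ < 0 *)
  (Hrp_dec : forall v, exists d, is_derive rp v d /\ d < 0)
  (* Case 2: d_v r_- > 0 (in particular (3): its sign never changes) *)
  (Hrm_inc : forall v, exists d, is_derive rm v d /\ 0 < d)
  (* (2) r_+-(v) -> r_c *)
  (Hrp_lim : is_lim rp p_infty rc)
  (Hrm_lim : is_lim rm p_infty rc)
  (* (4) r-derivatives of A, F, h = A F have finite limits as v -> oo *)
  (HAlim : forall n r, exists l : R, is_lim (fun v => Derive_n (A v) n r) p_infty l)
  (HFlim : forall n r, exists l : R, is_lim (fun v => Derive_n (F v) n r) p_infty l)
  (Hhlim : forall n r, exists l : R,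
     is_lim (fun v => Derive_n (fun r' => A v r' * F v r') n r) p_infty l)
  (* the compactified outgoing null coordinate *)
  (HU : compactified_U A F rp rm rc v0 U) :
  exists Upinf Uminf : R,
    is_lim (fun v => U v (rp v)) p_infty Upinf /\
    is_lim (fun v => U v (rm v)) p_infty Uminf /\
    -1 < U v0 (rp v0) /\ U v0 (rp v0) < Upinf /\ Upinf <= Uminf /\
    Uminf < U v0 (rm v0) /\ U v0 (rm v0) < 1 /\
    (type1 Upinf Uminf \/ type2 Upinf Uminf).
Proof.
  apply (main_result A F rp rm rc v0 U); assumption.
Qed.
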